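(* Let $n>1$, let $\mathbf{A}\in\mathbb{R}^{n\times n}$ be symmetric positive definite with $\mathbf{I}-\mathbf{A}$ invertible, $\mathbf{b}\in\mathbb{R}^n$, $\mathcal{FP}(\mathbf{x})=\mathbf{A}\mathbf{x}+\mathbf{b}$, and $\mathbf{x}^\star$ the unique fixed point of $\mathcal{FP}$. Let $\mathbf{v}_1,\mathbf{v}_2$ be two orthogonal eigenvectors of $\mathbf{A}$ with eigenvalues $\lambda_1,\lambda_2$, such that at most one of $\lambda_1,\lambda_2$ is larger than $1$ and none equals $1$, and let $\mathbf{x}^0$ satisfy $\mathbf{x}^0-\mathbf{x}^\star\in\mathrm{span}\{\mathbf{v}_1,\mathbf{v}_2\}$. Then the sequence $\{\mathbf{x}^i\}$ generated by AA$^\star$(1) applied to $\mathcal{FP}$ from $\mathbf{x}^0$ converges to $\mathbf{x}^\star$ (even though the fixed-point iteration $\mathcal{FP}$ itself need not be contractive).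
   Context: Let $\Delta\mathcal{FP}(\mathbf{x})=\mathcal{FP}(\mathbf{x})-\mathbf{x}$ and $\|\cdot\|$ the Euclidean norm. The restarted Anderson acceleration AA$^\star$(1) is the iteration: for $i=0,2,4,\dots$, set $\mathbf{x}^{i+1}=\mathcal{FP}(\mathbf{x}^i)$; choose $\alpha^{(i+1)}\in\mathbb{R}$ minimizing $\|\Delta\mathcal{FP}(\mathbf{x}^{i+1})+\alpha^{(i+1)}(\Delta\mathcal{FP}(\mathbf{x}^i)-\Delta\mathcal{FP}(\mathbf{x}^{i+1}))\|$; set $\mathbf{x}^{i+2}=\mathcal{FP}(\mathbf{x}^{i+1})+\alpha^{(i+1)}(\mathcal{FP}(\mathbf{x}^i)-\mathcal{FP}(\mathbf{x}^{i+1}))$. *)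

(* Defs.v *)
From HB Require Import structures.
From mathcomp Require Import all_boot all_order all_algebra.
From mathcomp Require Import all_classical all_reals all_analysis.
Set Implicit Arguments. Unset Strict Implicit. Unset Printing Implicit Defensive.
Import Order.TTheory GRing.Theory Num.Theory.
Local Open Scope ring_scope.

Definition enorm (R : realType) (n : nat) (v : 'cV[R]_n) : R :=
  Num.sqrt (\sum_(i < n) v i ord0 ^+ 2).

Definition dotv (R : realType) (n : nat) (u v : 'cV[R]_n) : R :=
  \sum_(i < n) u i ord0 * v i ord0.

Definition FP (R : realType) (n : nat) (A : 'M[R]_n) (b : 'cV[R]_n)
  (x : 'cV[R]_n) : 'cV[R]_n := A *m x + b.

Definition DFP (R : realType) (n : nat) (A : 'M[R]_n) (b : 'cV[R]_n)
  (x : 'cV[R]_n) : 'cV[R]_n := FP A b x - x.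

Definition spd (R : realType) (n : nat) (A : 'M[R]_n) : Prop :=
  A^T = A /\ forall v : 'cV[R]_n, v != 0 -> 0 < dotv v (A *m v).

(* (x, alpha) is a run of the restarted Anderson acceleration AA*(1) on FP
   starting from x0: for every even i, x^{i+1} = FP(x^i), alpha^{(i+1)} is a
   minimizer of the Euclidean residual norm, and
   x^{i+2} = FP(x^{i+1}) + alpha^{(i+1)} (FP(x^i) - FP(x^{i+1})).
   (Any choice of minimizer is allowed in case of non-uniqueness.) *)
Definition AAstar1_run (R : realType) (n : nat) (A : 'M[R]_n) (b : 'cV[R]_n)
  (x0 : 'cV[R]_n) (x : nat -> 'cV[R]_n) (alpha : nat -> R) : Prop :=
  x 0%N = x0 /\
  forall i : nat, ~~ odd i ->
    [/\ x i.+1 = FP A b (x i),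
        (forall beta : R,
           enorm (DFP A b (x i.+1) + alpha i.+1 *: (DFP A b (x i) - DFP A b (x i.+1)))
           <= enorm (DFP A b (x i.+1) + beta *: (DFP A b (x i) - DFP A b (x i.+1))))
      & x i.+2 = FP A b (x i.+1) + alpha i.+1 *: (FP A b (x i) - FP A b (x i.+1))].

(* Main.v *)
Require Import Defs.
From HB Require Import structures.
From mathcomp Require Import all_boot all_order all_algebra.
From mathcomp Require Import all_classical all_reals all_analysis.
From mathcomp Require Import ring lra zify.
Import Order.TTheory GRing.Theory Num.Theory.
Import numFieldNormedType.Exports.
Local Open Scope classical_set_scope.
Local Open Scope ring_scope.
Set Implicit Arguments. Unset Strict Implicit.

Lemma qlt1 (R : realType) (l1 l2 : R) : 0 < l1 -> 0 < l2 -> l1 != 1 -> l2 != 1 ->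
  ~ (1 < l1 /\ 1 < l2) ->
  l1 * l2 * `|l2 - l1| < `|l1 - 1| * l1 + `|l2 - 1| * l2.
Proof.
move=> h1 h2 n1 n2 nb.
have [c1|c1] := ltP l1 1; have [c2|c2] := ltP l2 1.
- have -> : `|l1 - 1| = 1 - l1 by rewrite ltr0_norm ?opprB // subr_lt0.
  have -> : `|l2 - 1| = 1 - l2 by rewrite ltr0_norm ?opprB // subr_lt0.
  case: (boolP (l1 <= l2)) => c3.
  + have -> : `|l2 - l1| = l2 - l1 by rewrite ger0_norm // subr_ge0.
    have p1 : 0 < (1 - l2) * l2 by apply: mulr_gt0; lra.
    have p2 : l1 * l2 * (l2 - l1) <= l1 * l2 * (1 - l1) by apply: ler_wpM2l; [apply: mulr_ge0; lra|lra].
    have p4 : 0 < l1 * (1 - l1) * (1 - l2) by do 2?apply: mulr_gt0; lra.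
    have p3 : l1 * l2 * (1 - l1) < l1 * (1 - l1) by nra.
    nra.
  + rewrite -ltNge in c3.
    have -> : `|l2 - l1| = l1 - l2 by rewrite ltr0_norm ?opprB // subr_lt0.
    have p1 : 0 < (1 - l1) * l1 by apply: mulr_gt0; lra.
    have p2 : l1 * l2 * (l1 - l2) <= l1 * l2 * (1 - l2) by apply: ler_wpM2l; [apply: mulr_ge0; lra|lra].
    have p4 : 0 < l2 * (1 - l2) * (1 - l1) by do 2?apply: mulr_gt0; lra.
    have p3 : l1 * l2 * (1 - l2) < l2 * (1 - l2) by nra.
    nra.
- have c2' : 1 < l2 by rewrite lt_neqAle eq_sym n2.
  have -> : `|l1 - 1| = 1 - l1 by rewrite ltr0_norm ?opprB // subr_lt0.
  have -> : `|l2 - 1| = l2 - 1 by rewrite gtr0_norm // subr_gt0.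
  have -> : `|l2 - l1| = l2 - l1 by rewrite gtr0_norm // subr_gt0; lra.
  have p : 0 < (1 - l1) * (l2 - 1) * (l2 - l1) by do 2?apply: mulr_gt0; lra.
  nra.
- have c1' : 1 < l1 by rewrite lt_neqAle eq_sym n1.
  have -> : `|l2 - 1| = 1 - l2 by rewrite ltr0_norm ?opprB // subr_lt0.
  have -> : `|l1 - 1| = l1 - 1 by rewrite gtr0_norm // subr_gt0.
  have -> : `|l2 - l1| = l1 - l2 by rewrite ltr0_norm ?opprB // subr_lt0; lra.
  have p : 0 < (1 - l2) * (l1 - 1) * (l1 - l2) by do 2?apply: mulr_gt0; lra.
  nra.
- have c1' : 1 < l1 by rewrite lt_neqAle eq_sym n1.
  have c2' : 1 < l2 by rewrite lt_neqAle eq_sym n2.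
  by case: nb.
Qed.

Lemma cs (R : realType) (W1 W2 l1 l2 m1 m2 : R) : 0 <= W1 -> 0 <= W2 -> 0 < l1 -> 0 < l2 ->
  W1 * W2 * (`|m1| * l1 + `|m2| * l2) ^+ 2 <=
  (W1 * m1 ^+ 2 + W2 * m2 ^+ 2) * (l1 ^+ 2 * W2 + l2 ^+ 2 * W1).
Proof.
move=> *.
rewrite -(real_normK (num_real m1)) -(real_normK (num_real m2)).
have : 0 <= (W1 * `|m1| * l2 - W2 * `|m2| * l1) ^+ 2 by apply: sqr_ge0.
move=> H. nra.
Qed.

Lemma minim (R : realType) (N1 N2 a1 a2 b1 b2 al : R) : 0 < N1 -> 0 < N2 ->
  (forall be, (a1 + al * b1) ^+ 2 * N1 + (a2 + al * b2) ^+ 2 * N2 <=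
              (a1 + be * b1) ^+ 2 * N1 + (a2 + be * b2) ^+ 2 * N2) ->
  (a1 + al * b1) * b1 * N1 + (a2 + al * b2) * b2 * N2 = 0.
Proof.
move=> hN1 hN2 H.
set g := (a1 + al * b1) * b1 * N1 + (a2 + al * b2) * b2 * N2.
set h := b1 ^+ 2 * N1 + b2 ^+ 2 * N2.
have s1 : 0 <= b1 ^+ 2 * N1 by apply: mulr_ge0; [apply: sqr_ge0| apply: ltW].
have s2 : 0 <= b2 ^+ 2 * N2 by apply: mulr_ge0; [apply: sqr_ge0| apply: ltW].
have h0 : 0 <= h by rewrite /h; lra.
have [hz|hp] := eqVneq h 0.
  have /eqP : b1 ^+ 2 * N1 = 0 by move: hz; rewrite /h; lra.
  rewrite mulf_eq0 (gt_eqF hN1) orbF sqrf_eq0 => /eqP b10.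
  have /eqP : b2 ^+ 2 * N2 = 0 by move: hz; rewrite /h; lra.
  rewrite mulf_eq0 (gt_eqF hN2) orbF sqrf_eq0 => /eqP b20.
  rewrite b10 b20 in g *.
  by rewrite /g !mulr0 !mul0r addr0.
have hpos : 0 < h by rewrite lt_neqAle eq_sym hp.
have := H (al - g / h).
have E : forall be, (a1 + be * b1) ^+ 2 * N1 + (a2 + be * b2) ^+ 2 * N2 =
   (a1 + al * b1) ^+ 2 * N1 + (a2 + al * b2) ^+ 2 * N2 + 2 * (be - al) * g + (be - al) ^+ 2 * h.
  move=> be; rewrite /g /h; ring.
rewrite (E (al - g / h)) => H'.
have key : 0 <= 2 * (al - g / h - al) * g + (al - g / h - al) ^+ 2 * h by rewrite -addrA lerDl in H'.
have e2 : 2 * (al - g / h - al) * g + (al - g / h - al) ^+ 2 * h = - (g ^+ 2 / h).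
  by field.
rewrite e2 in key.
apply/eqP; rewrite -sqrf_eq0; apply/eqP.
apply: le_anti; rewrite sqr_ge0 andbT.
have : 0 <= - (g ^+ 2) / h by rewrite mulNr.
by rewrite pmulr_lge0 ?invr_gt0 // oppr_ge0.
Qed.

Section Step.
Variables (R : realType) (l1 l2 N1 N2 : R).
Definition mm1 := l1 - 1.
Definition mm2 := l2 - 1.
Definition WW1 (c1 : R) := c1 ^+ 2 * mm1 ^+ 2 * N1.
Definition WW2 (c2 : R) := c2 ^+ 2 * mm2 ^+ 2 * N2.
Definition DD c1 c2 := WW1 c1 * mm1 ^+ 2 + WW2 c2 * mm2 ^+ 2.
Definition KK1 c1 c2 := l1 * (l2 - l1) * mm2 * WW2 c2 / DD c1 c2.
Definition KK2 c1 c2 := - (l2 * (l2 - l1) * mm1 * WW1 c1 / DD c1 c2).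
Definition stepc (c : R * R) : R * R := (c.1 * KK1 c.1 c.2, c.2 * KK2 c.1 c.2).
Definition qq := (l1 * l2 * (l2 - l1)) ^+ 2 / (`|mm1| * l1 + `|mm2| * l2) ^+ 2.

Lemma two_step c : 0 < N1 -> 0 < N2 -> 0 < l1 -> 0 < l2 -> l1 != 1 -> l2 != 1 ->
  exists f, [/\ 0 <= f, f <= qq, (stepc (stepc c)).1 = f * c.1 & (stepc (stepc c)).2 = f * c.2].
Proof.
move=> hN1 hN2 hl1 hl2 n1 n2.
case: c => c1 c2; rewrite /stepc /=.
set k1 := KK1 c1 c2; set k2 := KK2 c1 c2.
have eW1 : WW1 (c1 * k1) = WW1 c1 * k1 ^+ 2 by rewrite /WW1; ring.
have eW2 : WW2 (c2 * k2) = WW2 c2 * k2 ^+ 2 by rewrite /WW2; ring.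
have eK1 : KK1 (c1 * k1) (c2 * k2) = l1 * (l2 - l1) * mm2 * (WW2 c2 * k2 ^+ 2) / DD (c1 * k1) (c2 * k2).
  by rewrite /KK1 eW2.
have eK2 : KK2 (c1 * k1) (c2 * k2) = - (l2 * (l2 - l1) * mm1 * (WW1 c1 * k1 ^+ 2) / DD (c1 * k1) (c2 * k2)).
  by rewrite /KK2 eW1.
have eD : DD (c1 * k1) (c2 * k2) = WW1 c1 * k1 ^+ 2 * mm1 ^+ 2 + WW2 c2 * k2 ^+ 2 * mm2 ^+ 2.
  by rewrite /DD eW1 eW2.
rewrite eK1 eK2.
set D' := DD (c1 * k1) (c2 * k2).
have id0 : l1 * mm2 * WW2 c2 * k2 + l2 * mm1 * WW1 c1 * k1 = 0.
  rewrite /k1 /k2 /KK1 /KK2; ring.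
have W1ge : 0 <= WW1 c1 by apply: mulr_ge0; [apply: mulr_ge0; apply: sqr_ge0 | apply: ltW].
have W2ge : 0 <= WW2 c2 by apply: mulr_ge0; [apply: mulr_ge0; apply: sqr_ge0 | apply: ltW].
have Dge : 0 <= DD c1 c2 by apply: addr_ge0; apply: mulr_ge0 => //; apply: sqr_ge0.
have D'ge : 0 <= D' by rewrite /D' eD; apply: addr_ge0; apply: mulr_ge0 => //; try apply: sqr_ge0; apply: mulr_ge0 => //; apply: sqr_ge0.
have ef : k1 * (l1 * (l2 - l1) * mm2 * (WW2 c2 * k2 ^+ 2) / D') =
   (l1 * (l2 - l1) * mm2 * WW2 c2) ^+ 2 * k2 ^+ 2 * (DD c1 c2)^-1 * D'^-1.
  by rewrite /k1 /KK1; ring.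
have qge : 0 <= qq by rewrite /qq mulr_ge0 ?invr_ge0 ?sqr_ge0.
exists (k1 * (l1 * (l2 - l1) * mm2 * (WW2 c2 * k2 ^+ 2) / D')).
split.
- rewrite ef; apply: mulr_ge0; [apply: mulr_ge0; [apply: mulr_ge0; apply: sqr_ge0 | by rewrite invr_ge0] | by rewrite invr_ge0].
- rewrite ef.
  have [z|nz] := eqVneq (WW1 c1 * WW2 c2 * (l2 - l1)) 0.
    have -> : (l1 * (l2 - l1) * mm2 * WW2 c2) ^+ 2 * k2 ^+ 2 =
       (l1 * l2 * mm2 * mm1 * (l2 - l1)) ^+ 2 * (WW1 c1 * WW2 c2 * (l2 - l1)) ^+ 2 * ((DD c1 c2)^-1) ^+ 2.
      by rewrite /k2 /KK2; ring.
    by rewrite z expr0n /= mulr0 !mul0r.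
  have W1n : WW1 c1 != 0 by move: nz; rewrite !mulf_eq0 negb_or => /andP[/norP[]].
  have W2n : WW2 c2 != 0 by move: nz; rewrite !mulf_eq0 negb_or => /andP[/norP[]].
  have dn : l2 - l1 != 0 by move: nz; rewrite !mulf_eq0 negb_or => /andP[].
  have m1n : mm1 != 0 by rewrite /mm1 subr_eq0.
  have m2n : mm2 != 0 by rewrite /mm2 subr_eq0.
  have W1p : 0 < WW1 c1 by rewrite lt_neqAle eq_sym W1n.
  have W2p : 0 < WW2 c2 by rewrite lt_neqAle eq_sym W2n.
  have m1p : 0 < mm1 ^+ 2 by rewrite lt_neqAle sqr_ge0 andbT eq_sym sqrf_eq0.
  have m2p : 0 < mm2 ^+ 2 by rewrite lt_neqAle sqr_ge0 andbT eq_sym sqrf_eq0.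
  have Dp : 0 < DD c1 c2 by rewrite /DD; apply: addr_gt0; apply: mulr_gt0.
  have Sp : 0 < l1 ^+ 2 * WW2 c2 + l2 ^+ 2 * WW1 c1.
    by apply: addr_gt0; apply: mulr_gt0 => //; apply: exprn_gt0.
  have eD2 : D' = (l2 - l1) ^+ 2 * mm1 ^+ 2 * mm2 ^+ 2 * WW1 c1 * WW2 c2 *
      (l1 ^+ 2 * WW2 c2 + l2 ^+ 2 * WW1 c1) * (DD c1 c2)^-1 ^+ 2.
    by rewrite /D' eD /k1 /k2 /KK1 /KK2; ring.
  have -> : (l1 * (l2 - l1) * mm2 * WW2 c2) ^+ 2 * k2 ^+ 2 / DD c1 c2 / D' =
     (l1 * l2 * (l2 - l1)) ^+ 2 * (WW1 c1 * WW2 c2 / (DD c1 c2 * (l1 ^+ 2 * WW2 c2 + l2 ^+ 2 * WW1 c1))).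
    rewrite eD2 /k2 /KK2. field.
    by rewrite (gt_eqF Sp) (gt_eqF Dp) W1n W2n m1n m2n dn.
  have Mp : 0 < (`|mm1| * l1 + `|mm2| * l2) ^+ 2.
    apply: exprn_gt0; apply: addr_gt0; apply: mulr_gt0 => //; by rewrite normr_gt0.
  rewrite /qq; apply: ler_wpM2l; first exact: sqr_ge0.
  rewrite ler_pdivrMr ?mulr_gt0 // [X in _ <= X]mulrC ler_pdivlMr //.
  exact: cs (ltW W1p) (ltW W2p) hl1 hl2.
- ring.
- have -> : c2 * k2 * - (l2 * (l2 - l1) * mm1 * (WW1 c1 * k1 ^+ 2) / D') =
     c2 * (k1 * (l1 * (l2 - l1) * mm2 * (WW2 c2 * k2 ^+ 2) / D')) -
     c2 * k1 * k2 * (l2 - l1) / D' * (l1 * mm2 * WW2 c2 * k2 + l2 * mm1 * WW1 c1 * k1) by ring.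
  by rewrite id0 mulr0 subr0 mulrC.
Qed.
End Step.

Lemma qq_lt1 (R : realType) (l1 l2 : R) : 0 < l1 -> 0 < l2 -> l1 != 1 -> l2 != 1 ->
  ~ (1 < l1 /\ 1 < l2) -> qq l1 l2 < 1.
Proof.
move=> h1 h2 n1 n2 nb.
have h := qlt1 h1 h2 n1 n2 nb.
have Mp : 0 < (`|mm1 l1| * l1 + `|mm2 l2| * l2) ^+ 2.
  apply: exprn_gt0; apply: addr_gt0; apply: mulr_gt0 => //; by rewrite normr_gt0 subr_eq0.
rewrite /qq ltr_pdivrMr // mul1r.
have -> : (l1 * l2 * (l2 - l1)) ^+ 2 = (l1 * l2 * `|l2 - l1|) ^+ 2.
  by rewrite !exprMn real_normK // num_real.
have x0 : 0 <= l1 * l2 * `|l2 - l1| by rewrite !mulr_ge0 // ltW.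
rewrite /mm1 /mm2; nra.
Qed.

Lemma step_correct (R : realType) (l1 l2 N1 N2 c1 c2 al : R) : 0 < N1 -> 0 < N2 ->
  l1 != 1 -> l2 != 1 ->
  (forall be,
    ((l1 - 1) * (l1 * c1) + al * ((l1 - 1) * c1 - (l1 - 1) * (l1 * c1))) ^+ 2 * N1 +
    ((l2 - 1) * (l2 * c2) + al * ((l2 - 1) * c2 - (l2 - 1) * (l2 * c2))) ^+ 2 * N2 <=
    ((l1 - 1) * (l1 * c1) + be * ((l1 - 1) * c1 - (l1 - 1) * (l1 * c1))) ^+ 2 * N1 +
    ((l2 - 1) * (l2 * c2) + be * ((l2 - 1) * c2 - (l2 - 1) * (l2 * c2))) ^+ 2 * N2) ->
  l1 * (l1 * c1) + al * (l1 * c1 - l1 * (l1 * c1)) = (stepc l1 l2 N1 N2 (c1, c2)).1 /\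
  l2 * (l2 * c2) + al * (l2 * c2 - l2 * (l2 * c2)) = (stepc l1 l2 N1 N2 (c1, c2)).2.
Proof.
move=> hN1 hN2 n1 n2 H.
have cond := minim hN1 hN2 H.
rewrite /stepc /= /KK1 /KK2.
set D := DD l1 l2 N1 N2 c1 c2.
have m1n : mm1 l1 != 0 by rewrite /mm1 subr_eq0.
have m2n : mm2 l2 != 0 by rewrite /mm2 subr_eq0.
have m1p : 0 < mm1 l1 ^+ 2 by rewrite lt_neqAle sqr_ge0 andbT eq_sym sqrf_eq0.
have m2p : 0 < mm2 l2 ^+ 2 by rewrite lt_neqAle sqr_ge0 andbT eq_sym sqrf_eq0.
have [Dz|Dn] := eqVneq D 0.
  have W1ge : 0 <= WW1 l1 N1 c1 * mm1 l1 ^+ 2.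
    by apply: mulr_ge0; [apply: mulr_ge0; [apply: mulr_ge0; apply: sqr_ge0 | apply: ltW] | apply: sqr_ge0].
  have W2ge : 0 <= WW2 l2 N2 c2 * mm2 l2 ^+ 2.
    by apply: mulr_ge0; [apply: mulr_ge0; [apply: mulr_ge0; apply: sqr_ge0 | apply: ltW] | apply: sqr_ge0].
  have /eqP : WW1 l1 N1 c1 * mm1 l1 ^+ 2 = 0 by move: Dz; rewrite /D /DD; lra.
  rewrite /WW1 !mulf_eq0 (gt_eqF hN1) (negPf m1n) !orbF orbb => /eqP c10.
  have /eqP : WW2 l2 N2 c2 * mm2 l2 ^+ 2 = 0 by move: Dz; rewrite /D /DD; lra.
  rewrite /WW2 !mulf_eq0 (gt_eqF hN2) (negPf m2n) !orbF orbb => /eqP c20.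
  by rewrite c10 c20 !(mulr0, mul0r, subr0) addr0.
have e1 : (l1 - al * mm1 l1) * D - (l2 - l1) * WW2 l2 N2 c2 * mm2 l2 =
   - mm1 l1 * (((l1 - 1) * (l1 * c1) + al * ((l1 - 1) * c1 - (l1 - 1) * (l1 * c1))) * ((l1 - 1) * c1 - (l1 - 1) * (l1 * c1)) * N1 +
    ((l2 - 1) * (l2 * c2) + al * ((l2 - 1) * c2 - (l2 - 1) * (l2 * c2))) * ((l2 - 1) * c2 - (l2 - 1) * (l2 * c2)) * N2).
  by rewrite /D /DD /WW1 /WW2 /mm1 /mm2; ring.
have e2 : (l2 - al * mm2 l2) * D + (l2 - l1) * WW1 l1 N1 c1 * mm1 l1 =
   - mm2 l2 * (((l1 - 1) * (l1 * c1) + al * ((l1 - 1) * c1 - (l1 - 1) * (l1 * c1))) * ((l1 - 1) * c1 - (l1 - 1) * (l1 * c1)) * N1 +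
    ((l2 - 1) * (l2 * c2) + al * ((l2 - 1) * c2 - (l2 - 1) * (l2 * c2))) * ((l2 - 1) * c2 - (l2 - 1) * (l2 * c2)) * N2).
  by rewrite /D /DD /WW1 /WW2 /mm1 /mm2; ring.
rewrite cond mulr0 in e1; rewrite cond mulr0 in e2.
have t1 : l1 - al * mm1 l1 = (l2 - l1) * WW2 l2 N2 c2 * mm2 l2 / D.
  by apply: (mulIf Dn); rewrite divfK //; apply/eqP; rewrite -subr_eq0 e1.
have t2 : l2 - al * mm2 l2 = - ((l2 - l1) * WW1 l1 N1 c1 * mm1 l1 / D).
  by apply: (mulIf Dn); rewrite mulNr divfK //; apply/eqP; rewrite -subr_eq0 opprK e2.
split.
- have -> : l1 * (l1 * c1) + al * (l1 * c1 - l1 * (l1 * c1)) = c1 * l1 * (l1 - al * mm1 l1).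
    by rewrite /mm1; ring.
  rewrite t1; ring.
- have -> : l2 * (l2 * c2) + al * (l2 * c2 - l2 * (l2 * c2)) = c2 * l2 * (l2 - al * mm2 l2).
    by rewrite /mm2; ring.
  rewrite t2; ring.
Qed.

Lemma geo4 (R : realType) (u : nat -> R) (q : R) : (forall i, 0 <= u i) -> 0 <= q -> q < 1 ->
  (forall i, u (i + 4)%N <= q * u i) -> u @ \oo --> (0 : R).
Proof.
move=> u0 q0 q1 H.
have Hk : forall k i, u (i + 4 * k)%N <= q ^+ k * u i.
  elim=> [|k IH] i; first by rewrite muln0 addn0 expr0 mul1r.
  have -> : (i + 4 * k.+1 = (i + 4 * k) + 4)%N by lia.
  apply: (le_trans (H _)); rewrite exprS -mulrA; apply: ler_wpM2l => //.
set M := u 0%N + u 1%N + u 2%N + u 3%N.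
have M0 : 0 <= M by rewrite /M !addr_ge0.
have HM : forall i, u i <= q ^+ (i %/ 4) * M.
  move=> i; rewrite {1}(divn_eq i 4) addnC mulnC.
  apply: (le_trans (Hk _ _)); apply: ler_wpM2l; first exact: exprn_ge0.
  have : (i %% 4 < 4)%N by rewrite ltn_mod.
  have a0 := u0 0%N; have a1 := u0 1%N; have a2 := u0 2%N; have a3 := u0 3%N; rewrite /M; case: (i %% 4)%N => [|[|[|[|]]]] // _; lra.
apply/cvgrPdist_lt => e e0.
have qa : `|q| < 1 by rewrite ger0_norm.
have := cvg_expr qa; move/cvgrPdist_lt => /(_ (e / (M + 1))).
have eM : 0 < e / (M + 1) by rewrite divr_gt0 // ltr_wpDl.
move=> /(_ eM) [N _ HN].
exists (4 * N)%N => // t /= Ht.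
rewrite sub0r normrN ger0_norm //.
apply: (le_lt_trans (HM t)).
have : `|0 - q ^+ (t %/ 4)| < e / (M + 1).
  apply: HN => /=; rewrite leq_divRL //; by rewrite mulnC.
rewrite sub0r normrN ger0_norm ?exprn_ge0 // ltr_pdivlMr ?ltr_wpDl // => h.
apply: le_lt_trans h; apply: ler_wpM2l; [exact: exprn_ge0 | lra].
Qed.

Lemma sqrt_scale (R : realType) (f qv a1 a2 N1 N2 : R) : 0 <= f -> f <= qv -> 0 <= N1 -> 0 <= N2 ->
  Num.sqrt ((f * a1) ^+ 2 * N1 + (f * a2) ^+ 2 * N2) <= qv * Num.sqrt (a1 ^+ 2 * N1 + a2 ^+ 2 * N2).
Proof.
move=> f0 fq n1 n2.
have E0 : 0 <= a1 ^+ 2 * N1 + a2 ^+ 2 * N2 by apply: addr_ge0; apply: mulr_ge0 => //; apply: sqr_ge0.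
have -> : (f * a1) ^+ 2 * N1 + (f * a2) ^+ 2 * N2 = f ^+ 2 * (a1 ^+ 2 * N1 + a2 ^+ 2 * N2) by ring.
rewrite sqrtrM ?sqr_ge0 // sqrtr_sqr ger0_norm //.
by apply: ler_wpM2r => //; apply: sqrtr_ge0.
Qed.

Section Vec.
Variables (R : realType) (n : nat) (A : 'M[R]_n) (b xs v1 v2 : 'cV[R]_n) (l1 l2 : R).
Hypotheses (hA1 : A *m v1 = l1 *: v1) (hA2 : A *m v2 = l2 *: v2)
  (hfix : FP A b xs = xs) (hd : dotv v1 v2 = 0).

Definition V c1 c2 := c1 *: v1 + c2 *: v2.

Lemma VB a1 a2 b1 b2 : V a1 a2 - V b1 b2 = V (a1 - b1) (a2 - b2).
Proof. by rewrite /V !scalerBl opprD addrACA. Qed.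

Lemma VD a1 a2 b1 b2 : V a1 a2 + V b1 b2 = V (a1 + b1) (a2 + b2).
Proof. by rewrite /V !scalerDl addrACA. Qed.

Lemma VZ k a1 a2 : k *: V a1 a2 = V (k * a1) (k * a2).
Proof. by rewrite /V scalerDr !scalerA. Qed.

Lemma AV c1 c2 : A *m V c1 c2 = V (l1 * c1) (l2 * c2).
Proof. by rewrite /V mulmxDr -!scalemxAr hA1 hA2 !scalerA !(mulrC l1) !(mulrC l2). Qed.

Lemma FPV c1 c2 : FP A b (xs + V c1 c2) = xs + V (l1 * c1) (l2 * c2).
Proof.
have hf : A *m xs + b = xs := hfix.
by rewrite /FP mulmxDr addrAC hf AV.
Qed.

Lemma DFPV c1 c2 : DFP A b (xs + V c1 c2) = V ((l1 - 1) * c1) ((l2 - 1) * c2).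
Proof.
rewrite /DFP FPV opprD addrACA subrr add0r VB.
by congr V; ring.
Qed.

Lemma dotV a1 a2 : dotv (V a1 a2) (V a1 a2) = a1 ^+ 2 * dotv v1 v1 + a2 ^+ 2 * dotv v2 v2.
Proof.
move: hd; rewrite /dotv /V => hd'.
under eq_bigr do rewrite !mxE.
have E : forall i : 'I_n, (a1 * v1 i ord0 + a2 * v2 i ord0) * (a1 * v1 i ord0 + a2 * v2 i ord0) =
  a1 ^+ 2 * (v1 i ord0 * v1 i ord0) + (2 * a1 * a2) * (v1 i ord0 * v2 i ord0) + a2 ^+ 2 * (v2 i ord0 * v2 i ord0).
  by move=> i; ring.
rewrite (eq_bigr _ (fun i _ => E i)) !big_split /= -!mulr_sumr hd' mulr0 addr0.
done.
Qed.

Lemma enormE (y : 'cV[R]_n) : enorm y = Num.sqrt (dotv y y).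
Proof. by rewrite /enorm /dotv; congr Num.sqrt; apply: eq_bigr => i _; rewrite expr2. Qed.

End Vec.

Theorem corollary6 (R : realType) (n : nat) (A : 'M[R]_n) (b : 'cV[R]_n)
  (xstar : 'cV[R]_n) (v1 v2 : 'cV[R]_n) (lambda1 lambda2 : R)
  (x0 : 'cV[R]_n) (x : nat -> 'cV[R]_n) (alpha : nat -> R) :
  (1 < n)%N ->
  spd A ->
  (1%:M - A) \in unitmx ->
  FP A b xstar = xstar ->
  v1 != 0 -> v2 != 0 ->
  A *m v1 = lambda1 *: v1 -> A *m v2 = lambda2 *: v2 ->
  dotv v1 v2 = 0 ->
  ~ (1 < lambda1 /\ 1 < lambda2) ->
  lambda1 != 1 -> lambda2 != 1 ->
  (exists c1 c2 : R, x0 - xstar = c1 *: v1 + c2 *: v2) ->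
  AAstar1_run A b x0 x alpha ->
  (fun i => enorm (x i - xstar)) @ \oo --> (0 : R).
Proof.
move=> _ [_ hspd] _ hfix nz1 nz2 hA1 hA2 hd nb n1 n2 [c01 [c02 hc]] [hx0 hrun].
set N1 := dotv v1 v1; set N2 := dotv v2 v2.
have dotZ : forall (u w : 'cV[R]_n) k, dotv u (k *: w) = k * dotv u w.
  by move=> u w k; rewrite /dotv mulr_sumr; apply: eq_bigr => i _; rewrite mxE; ring.
have sq0 : forall u : 'cV[R]_n, 0 <= dotv u u.
  by move=> u; rewrite /dotv; apply: sumr_ge0 => i _; rewrite -expr2 sqr_ge0.
have pos : forall (v : 'cV[R]_n) l, v != 0 -> A *m v = l *: v -> 0 < dotv v v /\ 0 < l.
  move=> v l nz hv; have := hspd v nz; rewrite hv dotZ => h.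
  have hN : 0 < dotv v v.
    rewrite lt_neqAle sq0 andbT eq_sym; apply/eqP => h0.
    by move: h; rewrite h0 mulr0 ltxx.
  by split => //; move: h; rewrite pmulr_lgt0.
have [hN1 hl1] := pos _ _ nz1 hA1.
have [hN2 hl2] := pos _ _ nz2 hA2.
pose cc k := iter k (stepc lambda1 lambda2 N1 N2) (c01, c02).
have Hev : forall k, x k.*2 = xstar + V v1 v2 (cc k).1 (cc k).2.
  elim=> [|k IH].
    by rewrite /= hx0 /V -hc addrC subrK.
  have hodd : ~~ odd k.*2 by rewrite odd_double.
  have [h1 hmin h2] := hrun _ hodd.
  rewrite doubleS h2 h1 IH /cc iterS -/(cc k).
  move: IH; case: (cc k) => c1 c2 /= IH.
  rewrite !(FPV hA1 hA2 hfix).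
  have sub : forall P Q : 'cV[R]_n, xstar + P - (xstar + Q) = P - Q.
    by move=> P Q; rewrite opprD addrACA subrr add0r.
  rewrite sub VB VZ -addrA VD.
  have hm := hmin.
  rewrite h1 IH (FPV hA1 hA2 hfix) !(DFPV hA1 hA2 hfix) in hm.
  have hm' : forall be,
    ((lambda1 - 1) * (lambda1 * c1) + alpha k.*2.+1 * ((lambda1 - 1) * c1 - (lambda1 - 1) * (lambda1 * c1))) ^+ 2 * N1 +
    ((lambda2 - 1) * (lambda2 * c2) + alpha k.*2.+1 * ((lambda2 - 1) * c2 - (lambda2 - 1) * (lambda2 * c2))) ^+ 2 * N2 <=
    ((lambda1 - 1) * (lambda1 * c1) + be * ((lambda1 - 1) * c1 - (lambda1 - 1) * (lambda1 * c1))) ^+ 2 * N1 +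
    ((lambda2 - 1) * (lambda2 * c2) + be * ((lambda2 - 1) * c2 - (lambda2 - 1) * (lambda2 * c2))) ^+ 2 * N2.
    move=> be; have := hm be.
    rewrite !VB !VZ !VD !enormE !dotV // ler_sqrt //.
    by apply: addr_ge0; apply: mulr_ge0; try apply: sqr_ge0; apply: ltW.
  have [e1 e2] := step_correct hN1 hN2 n1 n2 hm'.
  by rewrite e1 e2.
have Hodd : forall k, x k.*2.+1 = xstar + V v1 v2 (lambda1 * (cc k).1) (lambda2 * (cc k).2).
  move=> k; have hodd : ~~ odd k.*2 by rewrite odd_double.
  have [h1 _ _] := hrun _ hodd.
  by rewrite h1 Hev (FPV hA1 hA2 hfix).
have subx : forall P : 'cV[R]_n, xstar + P - xstar = P by move=> P; rewrite addrC addKr.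
have N1ge : 0 <= N1 by apply: ltW.
have N2ge : 0 <= N2 by apply: ltW.
have Hu : forall i, enorm (x (i + 4)%N - xstar) <= qq lambda1 lambda2 * enorm (x i - xstar).
  move=> i; set k := i./2.
  have [f [f0 fq e1 e2]] := two_step (cc k) hN1 hN2 hl1 hl2 n1 n2.
  have ecc : cc k.+2 = stepc lambda1 lambda2 N1 N2 (stepc lambda1 lambda2 N1 N2 (cc k)).
    by rewrite /cc !iterS.
  case: (boolP (odd i)) => hi.
  - have ei : i = k.*2.+1 by rewrite -[LHS]odd_double_half hi.
    have ei4 : (i + 4 = (k.+2).*2.+1)%N by rewrite ei !doubleS addn4.
    rewrite ei4 ei !Hodd !subx !enormE !dotV // ecc e1 e2 (mulrCA lambda1) (mulrCA lambda2).
    exact: sqrt_scale.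
  - have ei : i = k.*2 by rewrite -[LHS]odd_double_half (negPf hi).
    have ei4 : (i + 4 = (k.+2).*2)%N by rewrite ei !doubleS addn4.
    rewrite ei4 ei !Hev !subx !enormE !dotV // ecc e1 e2.
    exact: sqrt_scale.
apply: (geo4 (q := qq lambda1 lambda2)).
- by move=> i; rewrite enormE; apply: sqrtr_ge0.
- rewrite /qq; apply: mulr_ge0; [apply: sqr_ge0 | rewrite invr_ge0; apply: sqr_ge0].
- exact: qq_lt1.
- exact: Hu.
Qed.
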